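(* Let $\mathbf{H}\in\mathbb{R}^{m\times n}$ have full column rank, with rows indexed by sensors and columns by state variables. Let $\mathcal{S}_o\subseteq\{1,\dots,m\}$, let $\mathbf{H}_o$ be the submatrix of $\mathbf{H}$ consisting of the rows indexed by $\mathcal{S}_o$, and let $\mathcal{X}_o$ be the set of indices of the nonzero columns of $\mathbf{H}_o$. Suppose that (i) the state variables in $\mathcal{X}_o$ are observable with respect to $\mathcal{S}_o$; (ii) $\mathcal{C}\subseteq\mathcal{S}_o$ is a critical set with respect to $(\mathcal{S}_o,\mathcal{X}_o)$; (iii) the submatrix of $\mathbf{H}$ obtained by removing the rows indexed by $\mathcal{C}$ does not have full column rank. Let $\mathbf{U}_o\in\mathbb{R}^{|\mathcal{S}_o|\times|\mathcal{X}_o|}$ be a matrix whose columns form a basis of $\mathcal{R}(\mathbf{H}_o)$, and let $\bar{\mathbf{U}}_o$ be the submatrix of $\mathbf{U}_o$ obtained by removing the rows corresponding to sensors in $\mathcal{C}$. Then: (1) $\mathcal{N}(\bar{\mathbf{U}}_o)$ has dimension one; (2) for any nonzero $\mathbf{v}\in\mathcal{N}(\bar{\mathbf{U}}_o)$, the vector $\mathbf{a}\in\mathbb{R}^m$ with $a_i$ equal to the entry of $\mathbf{U}_o\mathbf{v}$ corresponding to sensor $i$ for $i\in\mathcal{C}$ and $a_i=0$ for $i\notin\mathcal{C}$ is an unobservable attack, i.e., $\mathbf{a}\neq\mathbf{0}$ and $\mathbf{a}\in\mathcal{R}(\mathbf{H})$.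
   Context: Linearized model $\mathbf{z}=\mathbf{H}\mathbf{x}+\mathbf{e}$. For a sensor set $\mathcal{S}$ and set of state variables $\mathcal{X}$, let $\mathbf{H}_{\mathcal{S}}$ keep only the rows of $\mathbf{H}$ in $\mathcal{S}$; the variables in $\mathcal{X}$ are observable with respect to $\mathcal{S}$ if every vector in $\mathcal{N}(\mathbf{H}_{\mathcal{S}})$ vanishes on all coordinates in $\mathcal{X}$. When this holds, $\mathcal{C}\subseteq\mathcal{S}$ is a critical set with respect to $(\mathcal{S},\mathcal{X})$ if the variables in $\mathcal{X}$ are not observable with respect to $\mathcal{S}\setminus\mathcal{C}$ but are observable with respect to $\mathcal{S}\setminus\mathcal{C}'$ for every strict subset $\mathcal{C}'\subsetneq\mathcal{C}$. An attack adding $\mathbf{a}$ to the data is unobservable iff $\mathbf{a}\neq\mathbf{0}$ and $\mathbf{a}\in\mathcal{R}(\mathbf{H})$. *)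

(* Defs.v *)
From HB Require Import structures.
From mathcomp Require Import all_boot all_order all_algebra.
Set Implicit Arguments. Unset Strict Implicit. Unset Printing Implicit Defensive.
Import Order.TTheory GRing.Theory Num.Theory.
Local Open Scope ring_scope.

Section Defs.
Variable R : realFieldType.
Variables m n : nat.

Definition observable (H : 'M[R]_(m, n)) (S : {set 'I_m}) (X : {set 'I_n}) : Prop :=
  forall x : 'cV[R]_n, (forall i, i \in S -> (H *m x) i 0 = 0) ->
    forall j, j \in X -> x j 0 = 0.

Definition critical_set (H : 'M[R]_(m, n)) (S : {set 'I_m}) (X : {set 'I_n})
    (C : {set 'I_m}) : Prop :=
  [/\ observable H S X, C \subset S, ~ observable H (S :\: C) X &
      forall C' : {set 'I_m}, C' \proper C -> observable H (S :\: C') X].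

(* submatrix of the rows of A indexed by the set S (in increasing order) *)
Definition rows_in (p : nat) (A : 'M[R]_(m, p)) (S : {set 'I_m}) : 'M[R]_(#|S|, p) :=
  rowsub (fun k : 'I_#|S| => enum_val k) A.

Definition full_col_rank (k p : nat) (A : 'M[R]_(k, p)) : bool := \rank A == p.

Definition nonzero_cols (H : 'M[R]_(m, n)) (S : {set 'I_m}) : {set 'I_n} :=
  [set j | [exists k : 'I_#|S|, rows_in H S k j != 0]].

(* the columns of U form a basis of the column space R(A) *)
Definition col_basis (k p q : nat) (U : 'M[R]_(k, q)) (A : 'M[R]_(k, p)) : bool :=
  ((U^T == A^T)%MS && row_free U^T).

Definition unobservable_attack (H : 'M[R]_(m, n)) (a : 'cV[R]_m) : Prop :=
  a != 0 /\ exists x : 'cV[R]_n, a = H *m x.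
End Defs.

(* Main.v *)
Require Import Defs.
From HB Require Import structures.
From mathcomp Require Import all_boot all_order all_algebra.
From Stdlib Require Import Classical.
Import Order.TTheory GRing.Theory Num.Theory.
Local Open Scope ring_scope.

Lemma rows_in_mulE (R : realFieldType) (m n p : nat) (A : 'M[R]_(m, n))
   (S : {set 'I_m}) (x : 'M[R]_(n, p)) k j :
  (rows_in A S *m x) k j = (A *m x) (enum_val k) j.
Proof. by rewrite /rows_in mul_rowsub_mx !mxE. Qed.

Lemma entryBZ (R : realFieldType) (p q : nat) (A B : 'M[R]_(p, q)) (a : R) i j :
  (A - a *: B) i j = A i j - a * B i j.
Proof. by rewrite !mxE. Qed.

Lemma entryZ (R : realFieldType) (p q : nat) (B : 'M[R]_(p, q)) (a : R) i j :
  (a *: B) i j = a * B i j.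
Proof. by rewrite !mxE. Qed.

Theorem corollary1 (R : realFieldType) (m n : nat) (H : 'M[R]_(m, n))
    (So C : {set 'I_m}) (U : 'M[R]_(#|So|, #|nonzero_cols H So|)) :
  full_col_rank H ->
  observable H So (nonzero_cols H So) ->
  critical_set H So (nonzero_cols H So) C ->
  ~~ full_col_rank (rows_in H (~: C)) ->
  col_basis U (rows_in H So) ->
  (* Ubar = U with the rows of the sensors in C removed *)
  let K := [set k : 'I_#|So| | enum_val k \notin C] in
  let Ubar := rowsub (fun k : 'I_#|K| => enum_val k) U in
  (* (1) the null space of Ubar, i.e. the row kernel of Ubar^T, has dimension one *)
  \rank (kermx Ubar^T) = 1%N /\
  (* (2) *)
  (forall v : 'cV[R]_#|nonzero_cols H So|, v != 0 -> Ubar *m v = 0 ->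
     forall a : 'cV[R]_m,
       (forall k : 'I_#|So|, enum_val k \in C -> a (enum_val k) 0 = (U *m v) k 0) ->
       (forall i : 'I_m, i \notin C -> a i 0 = 0) ->
       unobservable_attack H a).
Proof.
move=> Hfull Hobs [_ CsubSo Hnobs Hmin] Hnfull /andP[/andP[UsubH HsubU] Ufree] K Ubar.
set Ho := rows_in H So.
set Xo := nonzero_cols H So.
have [D UD] := submxP UsubH.
have [E HE] := submxP HsubU.
have UvE : forall v : 'cV[R]_#|Xo|, U *m v = Ho *m (D^T *m v).
  by move=> v; rewrite mulmxA -[U]trmxK UD trmx_mul trmxK.
have HoxE : forall x : 'cV[R]_n, Ho *m x = U *m (E^T *m x).
  by move=> x; rewrite mulmxA -[Ho]trmxK HE trmx_mul trmxK.
have Uinj : forall v : 'cV[R]_#|Xo|, U *m v = 0 -> v = 0.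
  move=> v Uv; rewrite -[v]trmxK; apply/eqP; rewrite trmx_eq0; apply/eqP.
  apply: (row_free_inj Ufree); by rewrite mul0mx -trmx_mul Uv trmx0.
have Ubarent : forall (v : 'cV[R]_#|Xo|) (k : 'I_#|K|), (Ubar *m v) k 0 = (U *m v) (enum_val k) 0.
  by move=> v k; rewrite /Ubar mul_rowsub_mx !mxE.
have UbarP : forall v : 'cV[R]_#|Xo|, Ubar *m v = 0 <->
    forall k : 'I_#|So|, enum_val k \notin C -> (U *m v) k 0 = 0.
  move=> v; split.
    move=> Hv k kC.
    have kK : k \in K by rewrite inE.
    by rewrite -(enum_rankK_in kK kK) -Ubarent Hv mxE.
  move=> Hk; apply/matrixP => k j; rewrite ord1 Ubarent [RHS]mxE; apply: Hk.
  by have := enum_valP k; rewrite inE.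
pose P (x : 'cV[R]_n) := forall i, i \in So -> i \notin C -> (H *m x) i 0 = 0.
pose Z (x : 'cV[R]_n) := forall i, i \in So -> (H *m x) i 0 = 0.
have PofU : forall v : 'cV[R]_#|Xo|, Ubar *m v = 0 -> P (D^T *m v).
  move=> v /UbarP Hv i iS iC.
  rewrite -(enum_rankK_in iS iS) -rows_in_mulE -/Ho -UvE Hv //.
  by rewrite enum_rankK_in.
have ZHo : forall x : 'cV[R]_n, Z x -> Ho *m x = 0.
  move=> x Zx; apply/matrixP => k j; rewrite ord1 rows_in_mulE [RHS]mxE Zx //.
  exact: enum_valP.
have HoZ : forall x : 'cV[R]_n, Ho *m x = 0 -> Z x.
  move=> x Hx i iS; by rewrite -(enum_rankK_in iS iS) -rows_in_mulE -/Ho Hx mxE.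
have K1 : forall c (x : 'cV[R]_n), c \in C -> P x -> (H *m x) c 0 = 0 -> Z x.
  move=> c x cC Px Hc.
  have xX := Hmin (C :\ c) (properD1 cC) x.
  have {}xX : forall j, j \in Xo -> x j 0 = 0.
    apply: xX => i; rewrite !inE negb_and negbK => /andP[/orP[/eqP->//|iC] iS].
    exact: Px.
  move=> i iS; rewrite mxE big1 // => j _.
  case jX: (j \in Xo); first by rewrite xX // mulr0.
  move/negbT: jX; rewrite /Xo /nonzero_cols inE negb_exists => /forallP/(_ (enum_rank_in iS i)).
  by rewrite negbK /rows_in mxE enum_rankK_in // => /eqP->; rewrite mul0r.
have decomp : forall (z : 'cV[R]_n) i0 (x : 'cV[R]_n), i0 \in C -> P z -> (H *m z) i0 0 != 0 -> P x ->
    Z (x - ((H *m x) i0 0 / (H *m z) i0 0) *: z).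
  move=> z i0 x i0C Pz nz Px.
  apply: (K1 i0) => //.
    move=> i iS iC; by rewrite mulmxBr -scalemxAr entryBZ (Px i iS iC) (Pz i iS iC) mulr0 subr0.
  by rewrite mulmxBr -scalemxAr entryBZ divfK // subrr.
have i0C : forall (z : 'cV[R]_n) i0, P z -> i0 \in So -> (H *m z) i0 0 != 0 -> i0 \in C.
  move=> z i0 Pz iS nz; apply/negPn/negP => iC; by rewrite (Pz i0 iS iC) eqxx in nz.
split.
- have [z [Pz nZz]] : exists z, P z /\ ~ Z z.
    apply: NNPP => Hne; apply: Hnobs => x Px'; apply: Hobs.
    apply: NNPP => nZ; apply: Hne; exists x; split => // i iS iC.
    by apply: Px'; rewrite inE iC.
  have [i0 [i0S nz]] : exists i0, i0 \in So /\ (H *m z) i0 0 != 0.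
    apply: NNPP => Hne; apply: nZz => i iS; apply: NNPP => Hi; apply: Hne.
    by exists i; split => //; apply/eqP.
  have i0C' := i0C z i0 Pz i0S nz.
  set v0 := E^T *m z.
  have v0nz : v0 != 0.
    apply/eqP => v00; apply: nZz; apply: HoZ; by rewrite HoxE -/v0 v00 mulmx0.
  have Ubv0 : Ubar *m v0 = 0.
    apply/UbarP => k kC; rewrite /v0 -HoxE rows_in_mulE Pz //; exact: enum_valP.
  have key : forall v : 'cV[R]_#|Xo|, Ubar *m v = 0 -> exists l, v = l *: v0.
    move=> v Hv; set x := D^T *m v.
    have Zw := decomp z i0 x i0C' Pz nz (PofU v Hv).
    set l := (_ / _) in Zw.
    exists l; apply/eqP; rewrite -subr_eq0; apply/eqP; apply: Uinj.
    rewrite mulmxBr UvE -/x -scalemxAr /v0 -HoxE scalemxAr -mulmxBr.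
    exact: ZHo.
  have r1 : \rank v0^T = 1%N by rewrite rank_rV trmx_eq0 v0nz.
  apply/eqP; rewrite -r1 eqn_leq; apply/andP; split.
    apply: mxrankS; apply/row_subP => i.
    set u := row i _.
    have uK : u *m Ubar^T = 0 by rewrite /u -row_mul mulmx_ker row0.
    have [l Hl] : exists l, u^T = l *: v0.
      apply: key; by rewrite -[Ubar]trmxK -trmx_mul uK trmx0.
    apply/sub_rVP; exists l; by rewrite -[u]trmxK Hl linearZ.
  apply: mxrankS; apply/sub_kermxP; by rewrite -trmx_mul Ubv0 trmx0.
- set A := rows_in H (~: C).
  have kernz : kermx A^T != 0.
    apply/eqP => k0; move: (mxrank_ker A^T); rewrite k0 mxrank0 mxrank_tr.
    move: Hnfull; rewrite /full_col_rank -/A => /negP Hr /esym/eqP.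
    rewrite subn_eq0 => Hle; apply: Hr; rewrite eqn_leq Hle rank_leq_col.
    done.
  have [u uk unz] := rowV0Pn kernz.
  set z := u^T.
  have Az : A *m z = 0.
    by rewrite -[A]trmxK -trmx_mul (sub_kermxP uk) trmx0.
  have Hz0 : forall i, i \notin C -> (H *m z) i 0 = 0.
    move=> i iC; have iS : i \in ~: C by rewrite inE.
    by rewrite -(enum_rankK_in iS iS) -rows_in_mulE -/A Az mxE.
  have Hznz : H *m z != 0.
    apply/eqP => Hz.
    have Hrf : row_free H^T by rewrite /row_free mxrank_tr.
    have : z^T *m H^T = 0 *m H^T by rewrite -trmx_mul Hz trmx0 mul0mx.
    move/(row_free_inj Hrf); rewrite trmxK => u0; by rewrite u0 eqxx in unz.
  have [i0 [j0 nz]] := matrix0Pn _ Hznz.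
  rewrite ord1 in nz.
  have i0C' : i0 \in C by apply/negPn/negP => iC; rewrite Hz0 // eqxx in nz.
  have Pz : P z by move=> i _; exact: Hz0.
  move=> v vnz Hv a Ha Ha0.
  set x := D^T *m v.
  have Zw := decomp z i0 x i0C' Pz nz (PofU v Hv).
  set l := (_ / _) in Zw.
  split.
    have Uvnz : U *m v != 0 by apply/eqP => /Uinj v0; rewrite v0 eqxx in vnz.
    have [k [j kj]] := matrix0Pn _ Uvnz.
    rewrite ord1 in kj.
    have kC : enum_val k \in C.
      apply/negPn/negP => kC; by rewrite (proj1 (UbarP v) Hv k kC) eqxx in kj.
    apply/eqP => a0; by rewrite -Ha // a0 mxE eqxx in kj.
  exists (l *: z); apply/matrixP => i j; rewrite ord1 -scalemxAr entryZ.
  case iC: (i \in C); last by rewrite Ha0 ?iC // Hz0 ?iC // mulr0.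
  have iS : i \in So by apply: (subsetP CsubSo).
  rewrite -(enum_rankK_in iS iS) Ha ?enum_rankK_in //.
  rewrite UvE -/x rows_in_mulE enum_rankK_in //.
  have := Zw i iS; rewrite mulmxBr -scalemxAr entryBZ => /eqP; rewrite subr_eq0 => /eqP.
  done.
Qed.
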